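(* Let $f_1,\dots,f_n:\mathbb{R}^d\to\mathbb{R}$ be such that each $f_i$ is $L_i$-smooth and $\mu_i$-strongly convex with minimizer $x_i$. Let $\alpha\in(0,1)$ and $\tilde f(x) = \frac{1}{n}\sum_{i=1}^n f_i(\alpha x + (1-\alpha)x_i)$, with minimizer $x^*$. Let $\overline{\mu} = \frac{1}{n}\sum_i\mu_i$. Then for any $x^0\in\mathbb{R}^d$, \[ \|x^0 - x^*\|^2 \leq \frac{1}{\overline{\mu}}\cdot\frac{1}{n}\sum_{i=1}^n L_i\|x^0 - x_i\|^2. \]
   Context: A differentiable $g$ is $L$-smooth if $\|\nabla g(x)-\nabla g(y)\|\leq L\|x-y\|$ for all $x,y$, and $\mu$-strongly convex if $g(x)\geq g(y)+\langle\nabla g(y),x-y\rangle+\frac{\mu}{2}\|x-y\|^2$ for all $x,y$. *)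

(* Defs.v *)
From HB Require Import structures.
From mathcomp Require Import all_boot all_order all_algebra.
From mathcomp Require Import all_classical all_reals all_analysis.
Set Implicit Arguments. Unset Strict Implicit. Unset Printing Implicit Defensive.
Import Order.TTheory GRing.Theory Num.Theory.
Import numFieldNormedType.Exports.
Local Open Scope ring_scope.

Definition dotp {R : realType} {d : nat} (u v : 'rV[R]_d) : R :=
  \sum_(j < d) u ord0 j * v ord0 j.

Definition enorm {R : realType} {d : nat} (u : 'rV[R]_d) : R :=
  Num.sqrt (dotp u u).

(* gradient of f at x: the vector of values of the (Frechet) differential
   on the standard basis vectors, so that 'd f x h = dotp (gradient f x) h *)
Definition gradient {R : realType} {d : nat} (f : 'rV[R]_d -> R^o) (x : 'rV[R]_d)
  : 'rV[R]_d := \row_(j < d) ('d f x) (delta_mx ord0 j).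

Definition L_smooth {R : realType} {d : nat} (f : 'rV[R]_d -> R^o) (L : R) : Prop :=
  (forall x, differentiable f x) /\
  forall x y, enorm (gradient f x - gradient f y) <= L * enorm (x - y).

Definition strongly_convex {R : realType} {d : nat} (f : 'rV[R]_d -> R^o) (mu : R)
  : Prop :=
  (forall x, differentiable f x) /\
  forall x y, f y + dotp (gradient f y) (x - y) + mu / 2 * enorm (x - y) ^+ 2 <= f x.

Definition is_minimizer {R : realType} {d : nat} (f : 'rV[R]_d -> R) (x : 'rV[R]_d)
  : Prop := forall y, f x <= f y.

(* Main.v *)
Require Import Defs.
From HB Require Import structures.
From mathcomp Require Import all_boot all_order all_algebra.
From mathcomp Require Import all_classical all_reals all_analysis.
From mathcomp Require Import ring lra.
Import Order.TTheory GRing.Theory Num.Theory.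
Import numFieldNormedType.Exports.
Local Open Scope ring_scope.

Section Aux.
Context {R : realType} {d : nat}.
Implicit Types (u v w : 'rV[R]_d) (a b : R).

Lemma dotpC u v : dotp u v = dotp v u.
Proof. by apply: eq_bigr => j _; rewrite mulrC. Qed.

Lemma dotp_linl a b u v w : dotp (a *: u + b *: v) w = a * dotp u w + b * dotp v w.
Proof.
rewrite /dotp !mulr_sumr -big_split /=; apply: eq_bigr => j _.
rewrite !mxE; ring.
Qed.

Lemma dotpZl a u w : dotp (a *: u) w = a * dotp u w.
Proof. by rewrite -[a *: u]addr0 -(scale0r u) dotp_linl mul0r addr0. Qed.

Lemma dotpZr a u w : dotp w (a *: u) = a * dotp w u.
Proof. by rewrite dotpC dotpZl dotpC. Qed.

Lemma dotpBl u v w : dotp (u - v) w = dotp u w - dotp v w.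
Proof.
have -> : u - v = 1 *: u + (-1) *: v by rewrite scale1r scaleN1r.
by rewrite dotp_linl mul1r mulN1r.
Qed.

Lemma dotpBr u v w : dotp w (u - v) = dotp w u - dotp w v.
Proof. by rewrite dotpC dotpBl !(dotpC w). Qed.

Lemma dotpDl u v w : dotp (u + v) w = dotp u w + dotp v w.
Proof.
have -> : u + v = 1 *: u + 1 *: v by rewrite !scale1r.
by rewrite dotp_linl !mul1r.
Qed.

Lemma dotp_ge0 u : 0 <= dotp u u.
Proof. by apply: sumr_ge0 => j _; rewrite -expr2 sqr_ge0. Qed.

Lemma enorm_ge0 u : 0 <= enorm u.
Proof. exact: sqrtr_ge0. Qed.

Lemma enorm_sq u : enorm u ^+ 2 = dotp u u.
Proof. by rewrite /enorm sqr_sqrtr // dotp_ge0. Qed.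

Lemma enormZ2 a u : enorm (a *: u) ^+ 2 = a ^+ 2 * enorm u ^+ 2.
Proof. by rewrite !enorm_sq dotpZl dotpZr mulrA expr2. Qed.

Lemma enormZ a u : enorm (a *: u) = `|a| * enorm u.
Proof.
rewrite /enorm dotpZl dotpZr mulrA -expr2 sqrtrM ?sqr_ge0 //.
by rewrite sqrtr_sqr.
Qed.

Lemma dotp0 u v : enorm u = 0 -> dotp u v = 0.
Proof.
move=> h; have h2 : dotp u u = 0 by rewrite -enorm_sq h expr2 mul0r.
have hj : forall j, u ord0 j = 0.
  move=> j; have := @psumr_eq0P R _ predT (fun j => u ord0 j * u ord0 j).
  have hp : forall k, predT k -> 0 <= u ord0 k * u ord0 k.
    by move=> k _; rewrite -expr2 sqr_ge0.
  move=> /(_ hp h2 j isT) /eqP.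
  by rewrite mulf_eq0 orbb => /eqP.
by apply: big1 => j _; rewrite hj mul0r.
Qed.

Lemma CS u v : dotp u v <= enorm u * enorm v.
Proof.
have [a0|ap] := eqVneq (enorm u) 0; first by rewrite dotp0 // a0 mul0r.
have [b0|bp] := eqVneq (enorm v) 0; first by rewrite dotpC dotp0 // b0 mulr0.
have ha : 0 < enorm u by rewrite lt0r ap enorm_ge0.
have hb : 0 < enorm v by rewrite lt0r bp enorm_ge0.
have := dotp_ge0 (enorm v *: u - enorm u *: v).
rewrite dotpBl !dotpBr !dotpZl !dotpZr -!enorm_sq (dotpC v u) => H.
have hab : 0 < enorm u * enorm v by apply: mulr_gt0.
nra.
Qed.

Lemma CSN u v : - (enorm u * enorm v) <= dotp u v.
Proof.
have := CS ((-1) *: u) v; rewrite dotpZl enormZ normrN normr1 mul1r.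
lra.
Qed.


Lemma enormZp a u : 0 <= a -> enorm (a *: u) = a * enorm u.
Proof. by move=> ha; rewrite enormZ ger0_norm. Qed.

Lemma grad0 (f : 'rV[R]_d -> R^o) L mu x : 0 < mu -> L_smooth f L ->
  strongly_convex f mu -> is_minimizer f x -> forall v, dotp (gradient f x) v = 0.
Proof.
move=> mu0 [_ hs] [_ hc] hm.
set g := gradient f x.
suff: enorm g = 0 by move=> h v; apply: dotp0.
set t := (2 * (`|L| + 1))^-1.
have hT : t * (2 * (`|L| + 1)) = 1 by rewrite mulVf // mulf_neq0 // gt_eqF // ltr_wpDl.
have t0 : 0 < t by rewrite invr_gt0 mulr_gt0 // ltr_wpDl.
set z := x - t *: g.
have h1 := hc x z.
have h2 := hm z.
have exz : x - z = t *: g by apply/rowP => j; rewrite !mxE; ring.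
have ezx : z - x = (-t) *: g by apply/rowP => j; rewrite !mxE; ring.
rewrite exz dotpZr enormZ2 in h1.
have h3 := hs z x.
rewrite ezx enormZ normrN (gtr0_norm t0) in h3.
set w := gradient f z - g in h3.
have hd : dotp (gradient f z) g = dotp w g + enorm g ^+ 2.
  by rewrite enorm_sq /w dotpBl subrK.
have h4 := CSN w g.
have e0 := enorm_ge0 g.
have w0 := enorm_ge0 w.
have hP : dotp (gradient f z) g <= 0.
  rewrite -(pmulr_rle0 _ t0).
  have : 0 <= mu / 2 * (t ^+ 2 * enorm g ^+ 2).
    by apply: mulr_ge0; [apply: divr_ge0; lra | apply: mulr_ge0; apply: sqr_ge0].
  lra.
have hLt : `|L| * t <= 2^-1.
  have hl := normr_ge0 L.
  have : 2 * (`|L| * t) <= 1 by nra.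
  lra.
have hw : enorm w * enorm g <= `|L| * t * enorm g ^+ 2.
  rewrite expr2 mulrA; apply: ler_wpM2r => //.
  apply: (le_trans h3); rewrite mulrA; apply: ler_wpM2r => //.
  apply: ler_wpM2r; first lra.
  exact: ler_norm.
have : enorm g ^+ 2 * (1 - `|L| * t) <= 0 by nra.
have : 0 <= enorm g ^+ 2 * (`|L| * t) by apply: mulr_ge0; [apply: sqr_ge0| apply: mulr_ge0; [apply: normr_ge0|lra]].
move=> ha hb.
have : enorm g ^+ 2 <= 0 by nra.
rewrite expr2 => hh; nra.
Qed.


End Aux.

Lemma dotp_sub0 {R : realType} {d : nat} (u : 'rV[R]_d) {v w : 'rV[R]_d} :
  dotp v w = 0 -> dotp u w = dotp (u - v) w :> R.
Proof. by move=> h; rewrite dotpBl h subr0. Qed.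




Section D.
Local Opaque gradient.
Variable R : realType.
Variable d : nat.
Lemma descent (f : 'rV[R]_d -> R^o) L mu x y N : 0 < mu -> L_smooth f L ->
  strongly_convex f mu -> (forall v, dotp (gradient f x) v = 0) -> (0 < N)%N ->
  f y - f x <= L / 2 * (1 + N%:R^-1) * enorm (y - x) ^+ 2.
Proof.
move=> mu0 [_ hs] [_ hc] hg N0.
have NR : N%:R != 0 :> R by rewrite pnatr_eq0 -lt0n.
set e := enorm (y - x).
set Ni := N%:R^-1 : R.
have Ni0 : 0 <= Ni by rewrite invr_ge0 ler0n.
have ee0 : 0 <= e := enorm_ge0 _.
pose z (m : nat) := x + (m%:R * Ni) *: (y - x).
have step : forall m, f (z m.+1) - f (z m) <= L * e ^+ 2 * (m.+1%:R * Ni) * Ni.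
  move=> m; have h1 := hc (z m) (z m.+1).
  have d1 : z m - z m.+1 = (- Ni) *: (y - x).
    by apply/rowP => j; rewrite /z !mxE mulrSr; ring.
  have d2 : z m.+1 - x = (m.+1%:R * Ni) *: (y - x).
    by apply/rowP => j; rewrite /z !mxE; ring.
  have c0 : 0 <= m.+1%:R * Ni by apply: mulr_ge0 => //; rewrite ler0n.
  rewrite d1 dotpZr in h1.
  have : 0 <= mu / 2 * enorm (- Ni *: (y - x)) ^+ 2.
    by apply: mulr_ge0; [apply: divr_ge0; lra | apply: sqr_ge0].
  move=> hmu.
  have hd := dotp_sub0 (gradient f (z m.+1)) (hg (y - x)) : dotp (gradient f (z m.+1)) (y - x) = dotp (gradient f (z m.+1) - gradient f x) (y - x).
  have h2 := CS (gradient f (z m.+1) - gradient f x) (y - x).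
  have h3 := hs (z m.+1) x.
  rewrite d2 enormZp // in h3.
  have h4 : enorm (gradient f (z m.+1) - gradient f x) * e <= L * (m.+1%:R * Ni * e) * e.
    by apply: ler_wpM2r.
  have h5 : Ni * dotp (gradient f (z m.+1)) (y - x) <= Ni * (L * (m.+1%:R * Ni * e) * e).
    apply: ler_wpM2l => //; rewrite hd; exact: le_trans h2 h4.
  have -> : L * e ^+ 2 * (m.+1%:R * Ni) * Ni = Ni * (L * (m.+1%:R * Ni * e) * e) by ring.
  clear hd h2 h3 h4.
  lra.
have ind : forall m, f (z m) - f x <= L * e ^+ 2 * (m%:R * (m%:R + 1)) / 2 * Ni ^+ 2.
  elim=> [|m IH].
    rewrite /z mul0r scale0r addr0 subrr.
    by rewrite (_ : _ * _ = 0) //; ring.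
  have st := step m.
  rewrite mulrSr in st *.
  have := lerD st IH.
  rewrite (_ : f (z m.+1) - f (z m) + (f (z m) - f x) = f (z m.+1) - f x); last by ring.
  move=> H; apply: (le_trans H); rewrite le_eqVlt; apply/orP; left; apply/eqP; by field.
have := ind N.
have -> : z N = y by apply/rowP => j; rewrite /z mulfV // scale1r !mxE; ring.
move=> H; apply: (le_trans H); rewrite le_eqVlt; apply/orP; left; apply/eqP; by rewrite /Ni; field.
Qed.

End D.




Lemma sc_combo {R : realType} {d : nat} (f : 'rV[R]_d -> R^o) (mu : R) a b t :
  strongly_convex f mu -> 0 <= t -> t <= 1 ->
  f (t *: a + (1 - t) *: b) + mu / 2 * (t * (1 - t)) * enorm (a - b) ^+ 2
    <= t * f a + (1 - t) * f b.
Proof.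
move=> [_ hc] t0 t1.
set w := t *: a + (1 - t) *: b.
have h1 := hc a w.
have h2 := hc b w.
have e1 : a - w = (1 - t) *: (a - b) by apply/rowP => j; rewrite /w !mxE; ring.
have e2 : b - w = (- t) *: (a - b) by apply/rowP => j; rewrite /w !mxE; ring.
rewrite e1 dotpZr enormZ2 in h1.
rewrite e2 dotpZr enormZ2 in h2.
move: h1 h2; generalize (dotp (gradient f w) (a - b)) => P h1 h2.
clear hc e1 e2.
have t1' : 0 <= 1 - t by lra.
have k1 := ler_wpM2l t0 h1.
have k2 := ler_wpM2l t1' h2.
lra.
Qed.

Lemma lim_arg {R : realType} (X B : R) : 0 <= X ->
  (forall N, (0 < N)%N -> (1 - N%:R^-1) * X <= (1 + N%:R^-1) * B) -> X <= B.
Proof.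
move=> X0 H.
have B0 : 0 <= B.
  have := H 1%N isT; rewrite invr1 subrr mul0r => h; lra.
rewrite leNgt; apply/negP => hlt.
set K := (X + B) / (X - B).
have XB : 0 < X - B by lra.
have K0 : 0 <= K by apply: divr_ge0; lra.
have hK : K * (X - B) = X + B by rewrite /K mulfVK // gt_eqF.
have := archi_boundP K0.
set N := Num.bound K => hN.
have N0 : (0 < N)%N by rewrite -(ltr0n R); apply: le_lt_trans hN.
have NR : N%:R != 0 :> R by rewrite pnatr_eq0 -lt0n.
have hNi : N%:R * N%:R^-1 = 1 :> R by rewrite mulfV.
have h := H N N0.
have h' := ler_wpM2l (ler0n R N) h.
have : N%:R * (X - B) <= X + B.
  have -> : N%:R * (X - B) = N%:R * ((1 - N%:R^-1) * X) - N%:R * ((1 + N%:R^-1) * B) + X + B.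
    apply/eqP; rewrite -subr_eq0 (_ : _ - _ = (N%:R * N%:R^-1 - 1) * (X + B)); [by rewrite hNi subrr mul0r | ring].
  lra.
have : K * (X - B) < N%:R * (X - B) by rewrite ltr_pM2r.
lra.
Qed.




Theorem proposition5 (R : realType) (d n : nat) (hn : (0 < n)%N)
  (f : 'I_n -> 'rV[R]_d -> R^o) (L mu : 'I_n -> R) (xs : 'I_n -> 'rV[R]_d)
  (hmu : forall i, 0 < mu i)
  (hsmooth : forall i, L_smooth (f i) (L i))
  (hconv : forall i, strongly_convex (f i) (mu i))
  (hmin : forall i, is_minimizer (f i) (xs i))
  (alpha : R) (halpha : 0 < alpha < 1)
  (xstar : 'rV[R]_d)
  (hxstar : is_minimizer
     (fun x => n%:R^-1 * \sum_(i < n) f i (alpha *: x + (1 - alpha) *: xs i)) xstar)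
  (x0 : 'rV[R]_d) :
  enorm (x0 - xstar) ^+ 2 <=
    (n%:R^-1 * \sum_(i < n) mu i)^-1 *
      (n%:R^-1 * \sum_(i < n) L i * enorm (x0 - xs i) ^+ 2).
Proof.
move: halpha => /andP [al0 al1].
have nR : n%:R != 0 :> R by rewrite pnatr_eq0 -lt0n.
have ni0 : 0 < n%:R^-1 :> R by rewrite invr_gt0 ltr0n.
pose G x := \sum_(i < n) f i (alpha *: x + (1 - alpha) *: xs i).
have hG : forall y, G xstar <= G y.
  by move=> y; have := hxstar y; rewrite /= ler_pM2l.
set D := enorm (x0 - xstar) ^+ 2.
set A := \sum_(i < n) mu i.
set B := \sum_(i < n) L i * enorm (x0 - xs i) ^+ 2.
have A0 : 0 < A.
  rewrite /A (bigD1 (Ordinal hn)) //=.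
  have h1 := hmu (Ordinal hn).
  have h2 : 0 <= \sum_(i < n | i != Ordinal hn) mu i by apply: sumr_ge0 => i _; apply: ltW.
  lra.
have D0 : 0 <= D by apply: sqr_ge0.
pose a i := alpha *: x0 + (1 - alpha) *: xs i.
pose b i := alpha *: xstar + (1 - alpha) *: xs i.
have key : forall N, (0 < N)%N -> (1 - N%:R^-1) * (D * A) <= (1 + N%:R^-1) * B.
  move=> N N0.
  have NR : N%:R != 0 :> R by rewrite pnatr_eq0 -lt0n.
  set t := N%:R^-1 : R.
  have t0 : 0 < t by rewrite invr_gt0 ltr0n.
  have t1 : t <= 1 by rewrite invf_le1 ?ler1n // ltr0n.
  set c := t * (1 - t) * (alpha ^+ 2 * D) / 2.
  pose u := t *: x0 + (1 - t) *: xstar.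
  have C : forall i, f i (alpha *: u + (1 - alpha) *: xs i) + c * mu i
                     <= t * f i (a i) + (1 - t) * f i (b i).
    move=> i.
    have := sc_combo (f i) (mu i) (a i) (b i) t (hconv i) (ltW t0) t1.
    have -> : t *: a i + (1 - t) *: b i = alpha *: u + (1 - alpha) *: xs i.
      by apply/rowP => j; rewrite /a /b /u !mxE; ring.
    have -> : a i - b i = alpha *: (x0 - xstar).
      by apply/rowP => j; rewrite /a /b !mxE; ring.
    rewrite enormZ2 -/D.
    move: (f i _) (f i (a i)) (f i (b i)) => p q r.
    have -> : c * mu i = mu i / 2 * (t * (1 - t)) * (alpha ^+ 2 * D) by rewrite /c; field.
    done.
  have S : \sum_(i < n) (f i (alpha *: u + (1 - alpha) *: xs i) + c * mu i)
           <= \sum_(i < n) (t * f i (a i) + (1 - t) * f i (b i)).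
    by apply: ler_sum => i _; exact: C.
  rewrite big_split /= -mulr_sumr -/A big_split /= -!mulr_sumr in S.
  have hu : G xstar <= \sum_(i < n) f i (alpha *: u + (1 - alpha) *: xs i) := hG u.
  have E : forall i, f i (a i) - f i (b i) <=
                     alpha ^+ 2 * (1 + t) / 2 * (L i * enorm (x0 - xs i) ^+ 2).
    move=> i.
    have hb := hmin i (b i).
    have hd := descent R d (f i) (L i) (mu i) (xs i) (a i) N (hmu i) (hsmooth i) (hconv i)
                 (@grad0 R d (f i) (L i) (mu i) (xs i) (hmu i) (hsmooth i) (hconv i) (hmin i)) N0.
    have ex : a i - xs i = alpha *: (x0 - xs i).
      by apply/rowP => j; rewrite /a !mxE; ring.
    rewrite ex enormZ2 -/t in hd.
    have -> : alpha ^+ 2 * (1 + t) / 2 * (L i * enorm (x0 - xs i) ^+ 2) =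
              L i / 2 * (1 + t) * (alpha ^+ 2 * enorm (x0 - xs i) ^+ 2) by field.
    move: hb hd; move: (f i (a i)) (f i (b i)) (f i (xs i)) => p q r; lra.
  have S2 : \sum_(i < n) (f i (a i) - f i (b i)) <=
     \sum_(i < n) (alpha ^+ 2 * (1 + t) / 2 * (L i * enorm (x0 - xs i) ^+ 2)).
    by apply: ler_sum => i _; exact: E.
  rewrite sumrB -mulr_sumr -/B in S2.
  have eG : G x0 = \sum_(i < n) f i (a i) by [].
  have eGs : G xstar = \sum_(i < n) f i (b i) by [].
  rewrite -eG -eGs in S S2.
  move: S S2 hu; move: (G x0) (G xstar) (\sum_(i < n) f i (alpha *: u + (1 - alpha) *: xs i)) => g0 gs gu S S2 hu.
  have h1 : c * A <= t * (alpha ^+ 2 * (1 + t) / 2 * B).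
    have : t * (g0 - gs) <= t * (alpha ^+ 2 * (1 + t) / 2 * B) by apply: ler_wpM2l => //; exact: ltW.
    lra.
  have h2 : t * (alpha ^+ 2 / 2) * ((1 - t) * (D * A)) <= t * (alpha ^+ 2 / 2) * ((1 + t) * B).
    have -> : t * (alpha ^+ 2 / 2) * ((1 - t) * (D * A)) = c * A by rewrite /c; field.
    by rewrite (_ : t * (alpha ^+ 2 / 2) * ((1 + t) * B) = t * (alpha ^+ 2 * (1 + t) / 2 * B)) //; field.
  rewrite ler_pM2l // in h2.
  by apply: mulr_gt0 => //; apply: divr_gt0 => //; apply: exprn_gt0.
have := @lim_arg R (D * A) B (mulr_ge0 D0 (ltW A0)) key.
move=> H.
have -> : (n%:R^-1 * A)^-1 * (n%:R^-1 * B) = B / A by field; rewrite gt_eqF.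
by rewrite ler_pdivlMr.
Qed.
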